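(* Let $Y$ be a sofic shift and $(G,\mathcal L)$ the follower set graph of $Y$. Then the future cover $(\mathbb K(Y),L_{\mathbb K(Y)})$ of $Y$ is isomorphic, as a labeled graph, to $(G_{reg},\mathcal L)$.
   Context: Let $Y\subseteq A^{\mathbb Z}$ be a sofic shift, $Y[0,\infty)=\{y_{[0,\infty)}:y\in Y\}$, $\mathbb W(Y)$ its set of words. For a word $w$ let $F(w)=\{z\in Y[0,\infty): wz\in Y[0,\infty)\}$, and for $y\in Y$ let $F(y)=\{z\in Y[0,\infty): y_{(-\infty,-1]}z\in Y\}$. The follower set graph $(G,\mathcal L)$ (as in Lind–Marcus) has as vertices the distinct sets $F(w)$, $w$ a word of $Y$, and an edge labeled $a$ from $F(w)$ to $F(wa)$ whenever $wa\in\mathbb W(Y)$ (one edge per vertex pair and label). For a labeled graph $(H,L_H)$ with edge shift $X_H$, follower set of a vertex: $f_H(v)=\{L_H(x): x$ a right-infinite path starting at $v\}$. A vertex $v$ is regular if there is a bi-infinite path $z\in X_H$ such that the edge $z_{-1}$ ends at $v$ and $f_H(v)=F(L_H(z))$. For right-resolving $(H,L_H)$ (distinct edges with common source have distinct labels), $(H_{reg},L_H)$ is the labeled subgraph whose vertices are the regular vertices and whose edges are the edges with source a regular vertex. The future cover $(\mathbb K(Y),L_{\mathbb K(Y)})$ is the labeled graph with vertices the distinct sets $F(y)$, $y\in Y$, and an edge labeled $a\in A$ from $F(y)$ to $F(z)$ exactly when $F(z)=\{w\in A^{\mathbb N}: aw\in F(y)\}$ (one edge per such pair and label). *)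

(* Defs.v *)
From Stdlib Require Import ZArith.
From mathcomp Require Import ssreflect ssrfun ssrbool eqtype ssrnat seq fintype.

Set Implicit Arguments.
Unset Strict Implicit.
Unset Printing Implicit Defensive.

Section Shifts.
Variable A : finType.

Definition biseq := Z -> A.
Definition rseq := nat -> A.

Definition sofic (Y : biseq -> Prop) : Prop :=
  exists (V E : finType) (s t : E -> V) (l : E -> A),
    forall y : biseq,
      Y y <-> exists p : Z -> E,
                (forall i : Z, t (p i) = s (p (i + 1)%Z)) /\
                (forall i : Z, y i = l (p i)).

Definition rays (Y : biseq -> Prop) : rseq -> Prop :=
  fun z => exists y, Y y /\ forall n : nat, z n = y (Z.of_nat n).

Definition occurs_at (w : seq A) (y : biseq) (i : Z) : Prop :=
  forall k : nat, k < size w -> y (i + Z.of_nat k)%Z = nth (y i) w k.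

Definition words (Y : biseq -> Prop) (w : seq A) : Prop :=
  exists y, Y y /\ exists i, occurs_at w y i.

Definition catw (w : seq A) (z : rseq) : rseq :=
  fun n => if n < size w then nth (z 0) w n else z (n - size w).

Definition consr (a : A) (z : rseq) : rseq :=
  fun n => match n with 0 => a | n'.+1 => z n' end.

Definition glue (y : biseq) (z : rseq) : biseq :=
  fun i => if (i <? 0)%Z then y i else z (Z.to_nat i).

Definition Fw (Y : biseq -> Prop) (w : seq A) : rseq -> Prop :=
  fun z => rays Y z /\ rays Y (catw w z).

Definition Fy (Y : biseq -> Prop) (y : biseq) : rseq -> Prop :=
  fun z => rays Y z /\ Y (glue y z).

End Shifts.

Record lgraph (A : Type) := LGraph {
  vert : Type;
  edge : Type;
  src : edge -> vert;
  tgt : edge -> vert;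
  lab : edge -> A
}.
Arguments vert {A}.
Arguments edge {A}.
Arguments src {A G} : rename.
Arguments tgt {A G} : rename.
Arguments lab {A G} : rename.

Section Graphs.
Variable A : finType.
Variable Y : biseq A -> Prop.

(* Follower set graph: vertices are the distinct sets F(w), w in W(Y); one edge
   labeled a from F(w) to F(wa) whenever wa in W(Y). *)
Definition fsg_vert := {S : rseq A -> Prop | exists w, words Y w /\ S = Fw Y w}.
Definition fsg_edge :=
  {t : fsg_vert * A * fsg_vert |
     exists w, words Y (rcons w t.1.2) /\
               sval t.1.1 = Fw Y w /\ sval t.2 = Fw Y (rcons w t.1.2)}.
Definition follower_set_graph : lgraph A :=
  @LGraph A fsg_vert fsg_edge
    (fun e => (sval e).1.1) (fun e => (sval e).2) (fun e => (sval e).1.2).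

(* Future cover: vertices the distinct sets F(y), y in Y; an edge labeled a from
   F(y) to F(z) exactly when F(z) = {w | a w in F(y)}. *)
Definition fc_vert := {S : rseq A -> Prop | exists y, Y y /\ S = Fy Y y}.
Definition fc_edge :=
  {t : fc_vert * A * fc_vert |
     sval t.2 = (fun w => sval t.1.1 (consr t.1.2 w))}.
Definition future_cover : lgraph A :=
  @LGraph A fc_vert fc_edge
    (fun e => (sval e).1.1) (fun e => (sval e).2) (fun e => (sval e).1.2).

Definition fH (H : lgraph A) (v : vert H) : rseq A -> Prop :=
  fun x => exists p : nat -> edge H,
    src (p 0) = v /\ (forall n, tgt (p n) = src (p n.+1)) /\
    (forall n, x n = lab (p n)).

Definition regular (H : lgraph A) (v : vert H) : Prop :=
  exists z : Z -> edge H,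
    (forall i : Z, tgt (z i) = src (z (i + 1)%Z)) /\
    tgt (z (-1)%Z) = v /\
    fH v = Fy Y (fun i => lab (z i)).

End Graphs.

Definition iso_to_subgraph (A : Type) (G1 G2 : lgraph A)
    (PV : vert G2 -> Prop) (PE : edge G2 -> Prop) : Prop :=
  exists (phi : vert G1 -> vert G2) (psi : edge G1 -> edge G2),
    injective phi /\ (forall v, PV v <-> exists u, phi u = v) /\
    injective psi /\ (forall e, PE e <-> exists d, psi d = e) /\
    (forall d, src (psi d) = phi (src d) /\ tgt (psi d) = phi (tgt d) /\
               lab (psi d) = lab d).

Arguments regular {A} Y H v.
Arguments fH {A} H v.
Arguments iso_to_subgraph {A} G1 G2 PV PE.

(* Main.v *)
Require Import Defs.
From Stdlib Require Import ZArith Lia IndefiniteDescription ProofIrrelevance FunctionalExtensionality PropExtensionality Classical.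
From mathcomp Require Import ssreflect ssrfun ssrbool eqtype ssrnat seq fintype.
From mathcomp Require Import zify.

Set Implicit Arguments.
Unset Strict Implicit.
Unset Printing Implicit Defensive.

Lemma sig_eq (T : Type) (P : T -> Prop) (a b : {x | P x}) : sval a = sval b -> a = b.
Proof. case: a => x hx; case: b => y hy /= exy; subst y; f_equal; apply: proof_irrelevance. Qed.

Lemma fin_stab (T : finType) (P : nat -> T -> Prop) :
  (forall m n v, m <= n -> P n v -> P m v) ->
  exists N, forall v, P N v -> forall n, P n v.
Proof.
move=> anti.
suff: forall s : seq T, exists N, forall v, v \in s -> P N v -> forall n, P n v.
  case/(_ (enum T)) => N HN; exists N => v; apply: HN; by rewrite mem_enum.
elim=> [|v s [N HN]]; first by exists 0.
case: (classic (forall n, P n v)) => Hv.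
  exists N => u; rewrite inE; case/orP; first by move/eqP->.
  exact: HN.
have [n0 Hn0] : exists n0, ~ P n0 v by apply: not_all_ex_not.
exists (maxn N n0) => u; rewrite inE; case/orP.
  move/eqP-> => Hp; exfalso; apply: Hn0; apply: anti Hp; exact: leq_maxr.
move=> us Hp; apply: HN => //; apply: anti Hp; exact: leq_maxl.
Qed.

Lemma pigeon (T : finType) (P : nat -> T -> Prop) :
  (forall m n v, m <= n -> P n v -> P m v) ->
  (forall n, exists v, P n v) -> exists v, forall n, P n v.
Proof.
move=> anti H; have [N HN] := fin_stab anti.
have [v Hv] := H N; exists v; exact: HN.
Qed.

Section Pres.
Variable A : finType.
Variable Y : biseq A -> Prop.
Variables (V E : finType) (s t : E -> V) (l : E -> A).
Hypothesis HY : forall y, Y y <-> exists p : Z -> E,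
  (forall i : Z, t (p i) = s (p (i + 1)%Z)) /\ (forall i : Z, y i = l (p i)).

Implicit Types (w : seq A) (z r : rseq A) (a : A).
Lemma Y_shift k y : Y y -> Y (fun i => y (i + k)%Z).
Proof.
case/HY=> p [hp hl]; apply/HY; exists (fun i => p (i + k)%Z); split=> i.
  by rewrite hp; congr (s (p _)); lia.
exact: hl.
Qed.

Section Closed.
Variable D : Z -> Prop.
Variable x : biseq A.

Definition Good (n : nat) (i : Z) (e : E) :=
  exists q : Z -> E,
    (forall j, (- Z.of_nat n <= j < Z.of_nat n)%Z -> t (q j) = s (q (j + 1)%Z)) /\
    (forall j, (- Z.of_nat n <= j <= Z.of_nat n)%Z -> D j -> x j = l (q j)) /\ q i = e.

Definition Good2 (n : nat) (i : Z) (e e' : E) :=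
  exists q : Z -> E,
    (forall j, (- Z.of_nat n <= j < Z.of_nat n)%Z -> t (q j) = s (q (j + 1)%Z)) /\
    (forall j, (- Z.of_nat n <= j <= Z.of_nat n)%Z -> D j -> x j = l (q j)) /\
    q i = e /\ q (i + 1)%Z = e'.

Hypothesis Hx : forall n : nat, exists y, Y y /\
  forall j, (- Z.of_nat n <= j <= Z.of_nat n)%Z -> D j -> y j = x j.

Lemma Good_anti i m n e : m <= n -> Good n i e -> Good m i e.
Proof.
move=> mn [q [h1 [h2 h3]]]; exists q; split; last split=> //.
  move=> j hj; apply: h1; lia.
move=> j hj; apply: h2; lia.
Qed.

Lemma Good2_anti i m n e e' : m <= n -> Good2 n i e e' -> Good2 m i e e'.
Proof.
move=> mn [q [h1 [h2 h3]]]; exists q; split; last split=> //.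
  move=> j hj; apply: h1; lia.
move=> j hj; apply: h2; lia.
Qed.

Lemma Good_ex n i : exists e, Good n i e.
Proof.
have [y [/HY [p [hp hl]] hy]] := Hx n.
exists (p i); exists p; split; first by move=> j _; apply: hp.
split=> // j hj hd; rewrite -hy // hl //.
Qed.

Definition Ginf i e := forall n, Good n i e.

Lemma Ginf_ex i : exists e, Ginf i e.
Proof. apply: pigeon; [move=> m n v; exact: Good_anti | move=> n; exact: Good_ex]. Qed.

Lemma Ginf_lab i e : Ginf i e -> D i -> x i = l e.
Proof.
move=> /(_ (Z.abs_nat i)) [q [_ [h2 <-]]] hd; apply: h2 => //; lia.
Qed.

Lemma Ginf_fwd i e : Ginf i e -> exists e', t e = s e' /\ Ginf (i + 1) e'.
Proof.
move=> He.
have [e' He'] : exists e', forall n, Good2 n i e e'.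
  apply: pigeon; first by move=> m n v; exact: Good2_anti.
  move=> n; have [q [h1 [h2 h3]]] := He (n + Z.abs_nat i + 1).
  exists (q (i + 1)%Z); apply: (@Good2_anti _ _ (n + Z.abs_nat i + 1)); first lia.
  by exists q.
exists e'; split.
  have [q [h1 [h2 [h3 h4]]]] := He' (Z.abs_nat i + 1).
  rewrite -h3 -h4; apply: h1; lia.
move=> n; have [q [h1 [h2 [h3 h4]]]] := He' n; by exists q.
Qed.

Lemma Ginf_bwd i e : Ginf i e -> exists e', t e' = s e /\ Ginf (i - 1) e'.
Proof.
move=> He.
have [e' He'] : exists e', forall n, Good2 n (i - 1) e' e.
  apply: pigeon; first by move=> m n v; exact: Good2_anti.
  move=> n; have [q [h1 [h2 h3]]] := He (n + Z.abs_nat i + 1).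
  exists (q (i - 1)%Z); apply: (@Good2_anti _ _ (n + Z.abs_nat i + 1)); first lia.
  exists q; do 3!split=> //; by rewrite Z.sub_add.
exists e'; split.
  have [q [h1 [h2 [h3 h4]]]] := He' (Z.abs_nat i + 1).
  rewrite -h3 -h4; apply: h1; lia.
move=> n; have [q [h1 [h2 [h3 h4]]]] := He' n; by exists q.
Qed.

Lemma closedY : exists y, Y y /\ forall j, D j -> y j = x j.
Proof.
have [e0 H0] := Ginf_ex 0.
have [f Hf] : exists f : Z * E -> E, forall ie, Ginf ie.1 ie.2 ->
    t ie.2 = s (f ie) /\ Ginf (ie.1 + 1) (f ie).
  apply: (@functional_choice (Z * E) E (fun ie e' => Ginf ie.1 ie.2 -> t ie.2 = s e' /\ Ginf (ie.1 + 1) e')) => -[i e] /=.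
  case: (classic (Ginf i e)) => H; last by exists e.
  have [e' He'] := Ginf_fwd H; by exists e'.
have [b Hb] : exists f : Z * E -> E, forall ie, Ginf ie.1 ie.2 ->
    t (f ie) = s ie.2 /\ Ginf (ie.1 - 1) (f ie).
  apply: (@functional_choice (Z * E) E (fun ie e' => Ginf ie.1 ie.2 -> t e' = s ie.2 /\ Ginf (ie.1 - 1) e')) => -[i e] /=.
  case: (classic (Ginf i e)) => H; last by exists e.
  have [e' He'] := Ginf_bwd H; by exists e'.
pose g := fix g n := match n with 0 => e0 | n'.+1 => f (Z.of_nat n', g n') end.
pose h := fix h n := match n with 0 => e0 | n'.+1 => b (- Z.of_nat n', h n')%Z end.
have Hg : forall n, Ginf (Z.of_nat n) (g n).
  elim=> [|n IH] //; have -> : Z.of_nat n.+1 = (Z.of_nat n + 1)%Z by lia.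
  exact: (Hf (Z.of_nat n, g n) IH).2.
have Hh : forall n, Ginf (- Z.of_nat n) (h n).
  elim=> [|n IH] //; have -> : (- Z.of_nat n.+1 = - Z.of_nat n - 1)%Z by lia.
  exact: (Hb (- Z.of_nat n, h n)%Z IH).2.
pose p j := if (j <? 0)%Z then h (Z.to_nat (- j)) else g (Z.to_nat j).
have Hp : forall j, Ginf j (p j).
  move=> j; rewrite /p; case: Z.ltb_spec => hj.
    have := Hh (Z.to_nat (- j)); have -> : (- Z.of_nat (Z.to_nat (- j)) = j)%Z by lia. by [].
  have := Hg (Z.to_nat j); have -> : (Z.of_nat (Z.to_nat j) = j)%Z by lia. by [].
exists (fun j => l (p j)); split.
  apply/HY; exists p; split=> // j.
  rewrite /p; case: (Z.ltb_spec j 0) => hj; case: (Z.ltb_spec (j + 1) 0) => hj1.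
  - have -> : Z.to_nat (- j) = (Z.to_nat (- (j + 1))).+1 by lia.
    exact: (Hb (- Z.of_nat (Z.to_nat (- (j + 1))), h (Z.to_nat (- (j + 1))))%Z (Hh _)).1.
  - have -> : Z.to_nat (- j) = 1 by lia.
    have -> : Z.to_nat (j + 1) = 0 by lia.
    by have /= [-> _] := Hb (- Z.of_nat 0, e0)%Z H0.
  - lia.
  - have -> : Z.to_nat (j + 1) = (Z.to_nat j).+1 by lia.
    by have /= [-> _] := Hf (Z.of_nat (Z.to_nat j), g (Z.to_nat j)) (Hg _).
move=> j hj; symmetry; exact: Ginf_lab.
Qed.

End Closed.

Lemma Y_shift' k y y' : Y y -> (forall i, y' i = y (i + k)%Z) -> Y y'.
Proof. move=> hy h; have -> : y' = (fun i => y (i + k)%Z) by apply: functional_extensionality. exact: Y_shift. Qed.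

Lemma rays_drop r k : rays Y r -> rays Y (fun n => r (n + k)).
Proof.
case=> y [hy hr]; exists (fun i => y (i + Z.of_nat k)%Z); split; first exact: Y_shift.
move=> n; rewrite hr; congr y; lia.
Qed.

Lemma rays_closed r : (forall n, exists r', rays Y r' /\ forall k, k < n -> r' k = r k) -> rays Y r.
Proof.
move=> H.
have [|y [hy hyr]] := @closedY (fun j => (0 <= j)%Z) (fun j => r (Z.to_nat j)).
  move=> n; have [r' [[y [hy hr]] h]] := H n.+1; exists y; split=> // j hj hd.
  rewrite (_ : j = Z.of_nat (Z.to_nat j)); last lia.
  rewrite Nat2Z.id -hr h //; lia.
exists y; split => // n; rewrite hyr; [congr r; lia | lia].
Qed.

Lemma catw_drop w z : (fun n => catw w z (n + size w)) = z.
Proof. apply: functional_extensionality => n; rewrite /catw ltnNge leq_addl /= addnK //. Qed.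

Lemma rays_catw w z : rays Y (catw w z) -> rays Y z.
Proof. by move/(rays_drop (size w)); rewrite catw_drop. Qed.

Lemma rays_consr a z : rays Y (consr a z) -> rays Y z.
Proof.
move/(rays_drop 1); have -> // : (fun n => consr a z (n + 1)) = z.
by apply: functional_extensionality => n; rewrite addn1.
Qed.

Lemma catw_rcons w a z : catw (rcons w a) z = catw w (consr a z).
Proof.
apply: functional_extensionality => n; rewrite /catw size_rcons nth_rcons.
case: (ltngtP n (size w)) => h.
- rewrite ltnS ltnW //; apply: set_nth_default => //.
- rewrite ltnS leqNgt h /=.
  have -> : n - size w = (n - (size w).+1).+1 by lia.
  by [].
- by rewrite h ltnSn subnn.
Qed.

Lemma Fw_rcons w a : Fw Y (rcons w a) = fun z => Fw Y w (consr a z).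
Proof.
apply: functional_extensionality => z; apply: propositional_extensionality.
rewrite /Fw catw_rcons; split=> [[h1 h2]|[h1 h2]]; split=> //.
  exact: rays_catw h2.
exact: rays_consr h1.
Qed.

Lemma rays_words w z : rays Y (catw w z) -> words Y w.
Proof.
case=> y [hy hr]; exists y; split=> //; exists 0%Z => k hk.
rewrite Z.add_0_l -hr /catw hk; exact: set_nth_default.
Qed.

Lemma words_Fw w : words Y w -> exists z, Fw Y w z.
Proof.
case=> y [hy [i hi]]; exists (fun n => y (i + Z.of_nat (size w + n))%Z); split.
  exists (fun j => y (j + (i + Z.of_nat (size w)))%Z); split; first exact: Y_shift.
  move=> n; congr y; lia.
exists (fun j => y (j + i))%Z; split; first exact: Y_shift.
move=> n; rewrite /catw; case: ifP => h.
  rewrite (set_nth_default (y i)) // -hi //; congr y; lia.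
congr y; lia.
Qed.

Lemma glue_nonneg y z n : glue y z (Z.of_nat n) = z n.
Proof. rewrite /glue; case: Z.ltb_spec => h; first lia. by rewrite Nat2Z.id. Qed.

Lemma Fy_Y y z : Fy Y y z <-> Y (glue y z).
Proof.
split; first by case.
move=> h; split=> //; exists (glue y z); split=> // n; by rewrite glue_nonneg.
Qed.

Lemma Fy_self y : Y y -> Fy Y y (fun n => y (Z.of_nat n)).
Proof.
move=> hy; apply/Fy_Y; apply: (Y_shift' (k := 0%Z) hy) => j.
rewrite /glue Z.add_0_r; case: Z.ltb_spec => // h; congr y; lia.
Qed.

Lemma Fy_neg y y' : (forall j, (j < 0)%Z -> y j = y' j) -> Fy Y y = Fy Y y'.
Proof.
move=> H; apply: functional_extensionality => z; rewrite /Fy.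
have -> // : glue y z = glue y' z.
apply: functional_extensionality => j; rewrite /glue; case: Z.ltb_spec => // h; exact: H.
Qed.

Lemma glue_consr y z j :
  glue y (consr (y 0%Z) z) j = glue (fun i => y (i + 1)%Z) z (j - 1)%Z.
Proof.
rewrite /glue; case: (Z.ltb_spec j 0) => h1; case: (Z.ltb_spec (j - 1) 0) => h2.
- congr y; lia.
- lia.
- have -> : j = 0%Z by lia. by [].
- have -> : Z.to_nat j = (Z.to_nat (j - 1)).+1 by lia. by [].
Qed.

Lemma Fy_shift y : Fy Y (fun j => y (j + 1)%Z) = fun z => Fy Y y (consr (y 0%Z) z).
Proof.
apply: functional_extensionality => z; apply: propositional_extensionality.
rewrite !Fy_Y; split=> h.
  apply: (Y_shift' (k := (-1)%Z) h) => j; rewrite glue_consr; congr glue; lia.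
apply: (Y_shift' (k := 1%Z) h) => j; rewrite glue_consr; congr glue; lia.
Qed.

Definition wl (y : biseq A) n := mkseq (fun k => y (Z.of_nat k - Z.of_nat n)%Z) n.

Lemma wl_word y n : Y y -> words Y (wl y n).
Proof.
move=> hy; exists y; split=> //; exists (- Z.of_nat n)%Z => k.
rewrite size_mkseq => hk; rewrite nth_mkseq //; congr y; lia.
Qed.

Lemma Fy_sub_Fw y n z : Fy Y y z -> Fw Y (wl y n) z.
Proof.
case=> hz hg; split=> //.
exists (fun i => glue y z (i - Z.of_nat n)%Z); split.
  apply: (Y_shift' (k := (- Z.of_nat n)%Z) hg) => i; congr glue; lia.
move=> k; rewrite /catw size_mkseq /glue; case: ifP => h.
  rewrite nth_mkseq //; case: Z.ltb_spec => h'; last lia. by [].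
case: Z.ltb_spec => h'; first lia. congr z; lia.
Qed.

Lemma Fy_stab y : Y y -> exists N, forall n, N <= n -> Fy Y y = Fw Y (wl y n).
Proof.
move=> hy.
pose S n v := exists p : Z -> E, (forall i, t (p i) = s (p (i + 1)%Z)) /\
   (forall j, (- Z.of_nat n <= j < 0)%Z -> y j = l (p j)) /\ s (p 0%Z) = v.
have anti : forall m n v, m <= n -> S n v -> S m v.
  move=> m n v mn [p [h1 [h2 h3]]]; exists p; split=> //; split=> // j hj; apply: h2; lia.
have [N HN] := fin_stab anti.
exists N => n hn; apply: functional_extensionality => z; apply: propositional_extensionality.
split; first exact: Fy_sub_Fw.
case=> hz [x [/HY [p [hp hl]] hxr]].
have Sn : S n (s (p (Z.of_nat n))).
  exists (fun j => p (j + Z.of_nat n)%Z); split.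
    move=> i; rewrite hp; congr (s (p _)); lia.
  split; last by [].
  move=> j hj; rewrite -hl.
  rewrite (_ : (j + Z.of_nat n)%Z = Z.of_nat (Z.to_nat (j + Z.of_nat n))); last lia.
  rewrite -hxr /catw size_mkseq; case: ifP => h; last lia.
  rewrite nth_mkseq //; congr y; lia.
have Sall : forall m, S m (s (p (Z.of_nat n))) by apply: HN; exact: anti Sn.
apply/Fy_Y.
have [|y'' [hy'' e]] := @closedY (fun _ => True) (glue y z).
  move=> m; have [q [hq [hql hq0]]] := Sall m.
  pose r j := if (j <? 0)%Z then q j else p (j + Z.of_nat n)%Z.
  exists (fun j => l (r j)); split.
    apply/HY; exists r; split=> // i; rewrite /r.
    case: (Z.ltb_spec i 0) => h1; case: (Z.ltb_spec (i + 1) 0) => h2 //.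
    - rewrite hq (_ : (i + 1)%Z = 0%Z); last lia. rewrite hq0; congr (s (p _)); lia.
    - lia.
    - rewrite hp; congr (s (p _)); lia.
  move=> j hj _; rewrite /r /glue; case: Z.ltb_spec => h1.
    rewrite hql //; lia.
  rewrite -hl (_ : (j + Z.of_nat n)%Z = Z.of_nat (Z.to_nat j + n)); last lia.
  rewrite -hxr /catw size_mkseq; case: ifP => h; first lia.
  congr z; lia.
have <- // : y'' = glue y z.
by apply: functional_extensionality => j; apply: e.
Qed.

Notation FG := (follower_set_graph Y).
Notation FC := (future_cover Y).

Lemma catw_nil z : catw [::] z = z.
Proof. by apply: functional_extensionality => n; rewrite /catw /= subn0. Qed.

Lemma fsg_tgt (e : fsg_edge Y) :
  sval (sval e).2 = fun z => sval (sval e).1.1 (consr (sval e).1.2 z).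
Proof. case: e => [[[u a] v] [w [hw [hu hv]]]] /=. by rewrite hv Fw_rcons hu. Qed.

Lemma fsg_ne (v : fsg_vert Y) : exists z, sval v z.
Proof. have [w [hw ->]] := proj2_sig v; exact: words_Fw. Qed.

Lemma catw_agree w x n z k : k < size w + n ->
  catw w (catw (mkseq x n) z) k = catw w x k.
Proof.
move=> hk; rewrite /catw; case: ifP => h; first exact: set_nth_default.
rewrite size_mkseq ifT; last lia.
rewrite nth_mkseq //; lia.
Qed.

Lemma nth_wx w x n d k : k < size w + n -> nth d (w ++ mkseq x n) k = catw w x k.
Proof.
move=> hk; rewrite nth_cat /catw; case: ifP => h; first exact: set_nth_default.
rewrite nth_mkseq //; lia.
Qed.

Lemma fH_sub (v : vert FG) x : fH FG v x -> sval v x.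
Proof.
case=> p [h0 [hp hx]].
have key : forall n, sval (src (p n)) = fun z => sval v (catw (mkseq x n) z).
  elim=> [|n IH].
    by rewrite h0 /=; apply: functional_extensionality => z; rewrite catw_nil.
  rewrite -hp /= fsg_tgt; move: IH => /= ->.
  apply: functional_extensionality => z.
  by rewrite mkseqS catw_rcons hx.
have [w [hw hv]] := proj2_sig v.
have hwx : rays Y (catw w x).
  apply: rays_closed => n.
  have [zn hzn] := fsg_ne (src (p n)).
  move: hzn; rewrite key hv => -[_ hr].
  exists (catw w (catw (mkseq x n) zn)); split=> // k hk.
  apply: catw_agree; lia.
rewrite hv; split=> //; exact: rays_catw hwx.
Qed.

Lemma fH_sup (v : vert FG) x : sval v x -> fH FG v x.
Proof.
have [w [hw hv]] := proj2_sig v.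
rewrite hv => -[hx hwx].
have W : forall n, words Y (w ++ mkseq x n).
  move=> n; case: hwx => y [hy hr]; exists y; split=> //; exists 0%Z => k.
  rewrite size_cat size_mkseq => hk; rewrite Z.add_0_l -hr nth_wx //.
have W' : forall n, words Y (rcons (w ++ mkseq x n) (x n)).
  by move=> n; rewrite rcons_cat -mkseqS; apply: W.
pose mkv u (h : words Y u) : fsg_vert Y := exist _ (Fw Y u) (ex_intro _ u (conj h erefl)).
pose pe n : fsg_edge Y := exist _ (mkv _ (W n), x n, mkv _ (W' n))
   (ex_intro _ (w ++ mkseq x n) (conj (W' n) (conj erefl erefl))).
exists pe; split; last split=> // n.
  by apply: sig_eq; rewrite /= cats0 hv.
by apply: sig_eq; rewrite /= mkseqS rcons_cat.
Qed.

Lemma fH_eq (v : vert FG) : fH FG v = sval v.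
Proof.
apply: functional_extensionality => x; apply: propositional_extensionality.
split; [exact: fH_sub | exact: fH_sup].
Qed.

Lemma path_Y (z : Z -> edge FG) : (forall i, tgt (z i) = src (z (i + 1)%Z)) ->
  Y (fun i => lab (z i)).
Proof.
move=> hz.
have [|y'' [hy'' e]] := @closedY (fun _ => True) (fun i => lab (z i)).
  move=> n; pose v := src (z (- Z.of_nat n)%Z).
  have hf : fH FG v (fun k => lab (z (- Z.of_nat n + Z.of_nat k)%Z)).
    exists (fun k => z (- Z.of_nat n + Z.of_nat k)%Z); split.
      by rewrite /v Z.add_0_r.
    split=> // k; rewrite hz; congr (src (z _)); lia.
  have := fH_sub hf; have [w [hw ->]] := proj2_sig v => -[[y [hy hr]] _].
  exists (fun j => y (j + Z.of_nat n)%Z); split; first exact: Y_shift.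
  move=> j hj _; rewrite (_ : (j + Z.of_nat n)%Z = Z.of_nat (Z.to_nat (j + Z.of_nat n))); last lia.
  rewrite -hr; congr (lab (z _)); lia.
have <- // : y'' = (fun i => lab (z i)).
by apply: functional_extensionality => j; apply: e.
Qed.

Lemma phi_ok (u : fc_vert Y) : exists w, words Y w /\ sval u = Fw Y w.
Proof.
have [y [hy ->]] := proj2_sig u; have [N HN] := Fy_stab hy.
exists (wl y N); split; [exact: wl_word | exact: HN].
Qed.

Definition phi (u : fc_vert Y) : fsg_vert Y := exist _ (sval u) (phi_ok u).

Lemma psi_ok (d : fc_edge Y) : exists w, words Y (rcons w (sval d).1.2) /\
  sval (phi (sval d).1.1) = Fw Y w /\ sval (phi (sval d).2) = Fw Y (rcons w (sval d).1.2).
Proof.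
case: d => [[[u a] v] /= hv].
have [w [hw hu]] := phi_ok u; exists w.
have hv' : sval v = Fw Y (rcons w a) by rewrite hv Fw_rcons hu.
split; last by split.
have [y [hy hvy]] := proj2_sig v.
have := Fy_self hy; rewrite -hvy hv' => -[_ h]; exact: rays_words h.
Qed.

Definition psi (d : fc_edge Y) : fsg_edge Y :=
  exist _ (phi (sval d).1.1, (sval d).1.2, phi (sval d).2) (psi_ok d).

Lemma regular_iff (v : vert FG) : regular Y FG v <-> exists u, phi u = v.
Proof.
split.
  case=> z [hz [hzv hF]]; rewrite fH_eq in hF.
  have hY := path_Y hz.
  exists (exist _ (sval v) (ex_intro _ (fun i => lab (z i)) (conj hY hF))).
  exact: sig_eq.
case=> [[S [y [hy hS]]] <-].
pose yi i := fun j => y (j + i)%Z.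
pose fcv i : fc_vert Y := exist _ (Fy Y (yi i)) (ex_intro _ (yi i) (conj (Y_shift i hy) erefl)).
have fce_ok : forall i, Fy Y (yi (i + 1)%Z) = fun z => Fy Y (yi i) (consr (y i) z).
  move=> i; have := Fy_shift (yi i); rewrite /yi Z.add_0_l => <-.
  congr Fy; apply: functional_extensionality => j; congr y; lia.
pose fce i : fc_edge Y := exist _ (fcv i, y i, fcv (i + 1)%Z) (fce_ok i).
exists (fun i => psi (fce i)); split=> //; split.
  apply: sig_eq => /=; rewrite hS; congr Fy.
  by apply: functional_extensionality => j; rewrite /yi Z.add_0_r.
by rewrite fH_eq /= hS.
Qed.

Lemma iso_main : iso_to_subgraph FC FG (regular Y FG) (fun e => regular Y FG (src e)).
Proof.
have phi_inj : injective phi.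
  by move=> u1 u2 /(f_equal sval) /= h; apply: sig_eq.
exists phi, psi; split=> //; split; first exact: regular_iff.
split.
  move=> [[[u1 a1] v1] p1] [[[u2 a2] v2] p2] /(f_equal sval) /= [h1 h2 h3].
  by apply: sig_eq; rewrite /= (sig_eq h1) h2 (sig_eq h3).
split; last by [].
move=> e; split; last first.
  by case=> d <-; apply/regular_iff; exists (sval d).1.1.
case: e => [[[v1 a] v2] [w [hw [h1 h2]]]] /=.
move/regular_iff => [[S [y [hy hS]]] hu].
have hv1 : sval v1 = Fy Y y by rewrite -hu /= hS.
have h2' : sval v2 = fun z => Fy Y y (consr a z) by rewrite h2 Fw_rcons -h1 hv1.
have [z0 hz0] := words_Fw hw.
have hx : Y (glue y (consr a z0)).
  by apply/Fy_Y; move: hz0; rewrite -h2 h2'.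
set x := glue y (consr a z0) in hx.
have ex : sval v2 = Fy Y (fun j => x (j + 1)%Z).
  rewrite Fy_shift h2'; have -> : x 0%Z = a by [].
  rewrite (@Fy_neg x y) // => j hj; rewrite /x /glue; case: Z.ltb_spec => //; lia.
pose v'' : fc_vert Y := exist _ (sval v2) (ex_intro _ _ (conj (Y_shift 1 hx) ex)).
have hd : sval v'' = fun z => S (consr a z) by rewrite /= h2' hS.
exists (exist _ (exist _ S (ex_intro _ y (conj hy hS)), a, v'') hd).
apply: sig_eq => /=; rewrite hu; congr (_, _, _); exact: sig_eq.
Qed.

End Pres.

Theorem proposition3p16 (A : finType) (Y : biseq A -> Prop) :
  sofic Y ->
  iso_to_subgraph (future_cover Y) (follower_set_graph Y)
    (regular Y (follower_set_graph Y))
    (fun e => regular Y (follower_set_graph Y) (src e)).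
Proof.
case=> V [E [s [t [l HY]]]]; exact: (iso_main HY).
Qed.
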